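(* Let $n\ge2$. For any sign string $\sigma$, the closure of $L^n_\sigma$ in $\mathbb{R}^n$ satisfies $\overline{L^n_\sigma}=L^n_\sigma\cup\bigcup_{|\tau|>|\sigma|}L^n_\tau$, the union over sign strings $\tau$. In particular, for $m\ge2$, $\overline{L^n_{\sigma^m}}\cap\overline{L^n_{-\sigma^m}}=\bigcup_{|\tau|>m}L^n_\tau$.
   Context: Write $[n]=\{1,\dots,n\}$ and identify the signs $+,-$ with $+1,-1$. For $m\ge2$, $\sigma^m(j)=(-1)^j$ and $(-\sigma^m)(j)=(-1)^{j+1}$ for $j\in[m]$. A sign string is a function $\pm\sigma^m$, $m\ge2$, of length $|\sigma|=m$. An interval in $[n]$ is a set of consecutive integers; $J<J'$ means every element of $J$ is smaller than every element of $J'$. For $x\in\mathbb{R}^n$ let $t(x)=\min\{x_k-x_{k'}: k\text{ odd},\ k'\text{ even}\}$; $x$ is level if $t(x)=0$, and then $e(x)$ is the unique real with $x_k=e(x)=x_{k'}$ for some odd $k$ and even $k'$. A level point $x$ is of type $\sigma$ if there exist nonempty intervals $J_1<\dots<J_{|\sigma|}$ covering $[n]$ such that each $J_j$ contains some $k$ with $x_k=e(x)$, and $(-1)^k=\sigma(j)$ for all $k\in J_j$ with $x_k=e(x)$. $L^n_\sigma$ is the set of level points of type $\sigma$ in $\mathbb{R}^n$. *)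

(* Defs.v *)
From Stdlib Require Import Reals Lra Lia ZArith.
Open Scope R_scope.

(* A point of R^n is a function x : nat -> R of which only the coordinates
   x 1, ..., x n are relevant (indices k with 1 <= k <= n). All predicates
   below only inspect these coordinates. *)

(* Sign strings: a sign string is  +sigma^m  (neg = false) or -sigma^m
   (neg = true) with m >= 2; its value at j is (-1)^j resp. (-1)^(j+1). *)
Definition sgn_val (neg : bool) (j : nat) : Z :=
  if neg then ((-1) ^ Z.of_nat (j + 1))%Z else ((-1) ^ Z.of_nat j)%Z.

Definition parity_sign (k : nat) : Z := ((-1) ^ Z.of_nat k)%Z.

Definition in_range (n k : nat) : Prop := (1 <= k <= n)%nat.

(* t(x) = min { x_k - x_k' : k odd, k' even, k,k' in [n] };
   x is level iff t(x) = 0, i.e. all these differences are >= 0 and one of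
   them equals 0. *)
Definition t_ge0 (n : nat) (x : nat -> R) : Prop :=
  forall k k', in_range n k -> in_range n k' -> Nat.odd k = true ->
    Nat.even k' = true -> x k - x k' >= 0.

Definition level (n : nat) (x : nat -> R) : Prop :=
  t_ge0 n x /\
  exists k k', in_range n k /\ in_range n k' /\ Nat.odd k = true /\
    Nat.even k' = true /\ x k - x k' = 0.

Definition is_level_value (n : nat) (x : nat -> R) (e : R) : Prop :=
  exists k k', in_range n k /\ in_range n k' /\ Nat.odd k = true /\
    Nat.even k' = true /\ x k = e /\ x k' = e.

(* Nonempty intervals J_1 < ... < J_m covering [n] are encoded by breakpoints
   b 0 = 0 < b 1 < ... < b m = n, with J_j = { k | b (j-1) < k <= b j }. *)
Definition breakpoints (n m : nat) (b : nat -> nat) : Prop :=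
  b 0%nat = 0%nat /\ b m = n /\ (forall j, (j < m)%nat -> (b j < b (S j))%nat).

Definition L (n : nat) (neg : bool) (m : nat) (x : nat -> R) : Prop :=
  level n x /\
  exists e, is_level_value n x e /\
  exists b, breakpoints n m b /\
    forall j, (1 <= j <= m)%nat ->
      (exists k, (b (j - 1) < k <= b j)%nat /\ x k = e) /\
      (forall k, (b (j - 1) < k <= b j)%nat -> x k = e ->
         parity_sign k = sgn_val neg j).

Definition closure (n : nat) (S : (nat -> R) -> Prop) (x : nat -> R) : Prop :=
  forall eps, eps > 0 -> exists y, S y /\
    forall k, in_range n k -> Rabs (x k - y k) < eps.

(* Main.v *)
Require Import Defs.
From Stdlib Require Import Reals Lra Lia ZArith List Bool.
Open Scope R_scope.

Lemma ps_form k : parity_sign k = if Nat.even k then 1%Z else (-1)%Z.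
Proof.
  induction k as [|k IH]; [reflexivity|].
  unfold parity_sign in *. rewrite Nat2Z.inj_succ, Z.pow_succ_r by lia.
  rewrite IH, Nat.even_succ, <- Nat.negb_even. destruct (Nat.even k); reflexivity.
Qed.

Definition nb (b : bool) : nat := if b then 1%nat else 0%nat.

Lemma sv_form neg j : sgn_val neg j = parity_sign (j + nb neg).
Proof. destruct neg; unfold sgn_val, parity_sign, nb; simpl; [reflexivity| now rewrite Nat.add_0_r]. Qed.

Lemma ps_eq a b : parity_sign a = parity_sign b <-> Nat.even a = Nat.even b.
Proof. rewrite !ps_form. destruct (Nat.even a), (Nat.even b); split; congruence. Qed.

Lemma psv k neg j : parity_sign k = sgn_val neg j <-> Nat.even k = Nat.even (j + nb neg).
Proof. rewrite sv_form. apply ps_eq. Qed.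

Lemma even_S k : Nat.even (S k) = negb (Nat.even k).
Proof. rewrite Nat.even_succ, <- Nat.negb_even. reflexivity. Qed.

Definition Aset n (x : nat -> R) e neg m := exists a : nat -> nat,
 (forall j, (1 <= j)%nat -> (j < m)%nat -> (a j < a (S j))%nat) /\
 (forall j, (1 <= j <= m)%nat -> in_range n (a j) /\ x (a j) = e /\
    Nat.even (a j) = Nat.even (j + nb neg)).

Lemma bp_mono n r b : breakpoints n r b -> forall i j, (i <= j <= r)%nat -> (b i <= b j)%nat.
Proof.
  intros [_ [_ H]] i j. induction j as [|j IH]; intros Hij.
  - assert (i = 0)%nat by lia. subst; lia.
  - destruct (Nat.eq_dec i (S j)); [subst; lia|].
    assert (b j < b (S j))%nat by (apply H; lia). specialize (IH ltac:(lia)). lia.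
Qed.

Lemma bp_cover n r b k : breakpoints n r b -> (1 <= k <= n)%nat ->
  exists j, (1 <= j <= r)%nat /\ (b (j-1) < k <= b j)%nat.
Proof.
  intros Hb Hk. destruct Hb as [H0 [Hr Hi]].
  assert (forall j, (j <= r)%nat -> (k <= b j)%nat ->
    exists i, (1 <= i <= j)%nat /\ (b (i-1) < k <= b i)%nat) as Hg.
  { induction j as [|j IH]; intros Hj Hkj.
    - lia.
    - destruct (le_lt_dec k (b j)) as [h|h].
      + destruct (IH ltac:(lia) h) as [i Hi']. exists i; lia.
      + exists (S j). replace (S j - 1)%nat with j by lia. lia. }
  destruct (Hg r ltac:(lia) ltac:(lia)) as [i Hi']. exists i; lia.
Qed.

Lemma bp_order n r b k k' j j' : breakpoints n r b -> (1 <= j <= r)%nat -> (1 <= j' <= r)%nat ->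
  (b (j-1) < k <= b j)%nat -> (b (j'-1) < k' <= b j')%nat -> (k <= k')%nat -> (j <= j')%nat.
Proof.
  intros Hb Hj Hj' Hk Hk' Hkk. destruct (le_lt_dec j j') as [|h]; [assumption|].
  assert (b j' <= b (j-1))%nat by (apply (bp_mono n r b Hb); lia). lia.
Qed.

Lemma Aset_mono (m : nat) (a : nat -> nat) :
 (forall j, (1 <= j)%nat -> (j < m)%nat -> (a j < a (S j))%nat) ->
 forall i j, (1 <= i)%nat -> (i < j)%nat -> (j <= m)%nat -> (a i < a j)%nat.
Proof.
  intros H i j Hi. induction j as [|j IH]; intros Hij Hj; [lia|].
  destruct (Nat.eq_dec i j); [subst; apply H; lia|].
  assert (a j < a (S j))%nat by (apply H; lia). specialize (IH ltac:(lia) ltac:(lia)). lia.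
Qed.

Lemma nb_even12 neg : Nat.even (1 + nb neg) = negb (Nat.even (2 + nb neg)).
Proof. destruct neg; reflexivity. Qed.

Lemma even_Sj j neg : Nat.even (S j + nb neg) = negb (Nat.even (j + nb neg)).
Proof. simpl. apply even_S. Qed.

Lemma Aset_lv n x e neg m : (2 <= m)%nat -> Aset n x e neg m -> is_level_value n x e.
Proof.
  intros Hm [a [Ha Hb]].
  destruct (Hb 1%nat ltac:(lia)) as [R1 [X1 P1]].
  destruct (Hb 2%nat ltac:(lia)) as [R2 [X2 P2]].
  rewrite nb_even12 in P1.
  destruct (Nat.even (a 1%nat)) eqn:E1.
  - exists (a 2%nat), (a 1%nat). unfold Nat.odd. repeat split; auto; try apply R1; try apply R2.
    rewrite P2. destruct (Nat.even (2 + nb neg)); simpl in *; congruence.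
  - exists (a 1%nat), (a 2%nat). unfold Nat.odd. repeat split; auto; try apply R1; try apply R2.
    rewrite E1; reflexivity. rewrite P2. destruct (Nat.even (2 + nb neg)); simpl in *; congruence.
Qed.

Lemma lv_unique n x e e' : t_ge0 n x -> is_level_value n x e -> is_level_value n x e' -> e = e'.
Proof.
  intros Ht [k1 [k1' [A1 [B1 [C1 [D1 [E1 F1]]]]]]] [k2 [k2' [A2 [B2 [C2 [D2 [E2 F2]]]]]]].
  pose proof (Ht k1 k2' A1 B2 C1 D2). pose proof (Ht k2 k1' A2 B1 C2 D1). lra.
Qed.

Lemma lv_level n x e : t_ge0 n x -> is_level_value n x e -> level n x.
Proof.
  intros Ht [k [k' [A [B [C [D [E F]]]]]]]. split; auto.
  exists k, k'. repeat split; auto; try apply A; try apply B; lra.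
Qed.

Lemma fin_choice (P : nat -> nat -> Prop) m :
  (forall j, (j <= m)%nat -> exists k, P j k) -> exists f, forall j, (j <= m)%nat -> P j (f j).
Proof.
  induction m as [|m IH]; intros H.
  - destruct (H 0%nat (le_n _)) as [k Hk]. exists (fun _ => k). intros j Hj.
    assert (j = 0)%nat by lia. subst; auto.
  - destruct IH as [f Hf]. { intros; apply H; lia. }
    destruct (H (S m) (le_n _)) as [k Hk].
    exists (fun j => if Nat.eqb j (S m) then k else f j). intros j Hj.
    destruct (Nat.eqb_spec j (S m)). subst; auto. apply Hf; lia.
Qed.

Lemma L_pts n neg m x : L n neg m x -> t_ge0 n x /\ exists e, exists a : nat -> nat,
 (forall j, (1 <= j)%nat -> (j < m)%nat -> (a j < a (S j))%nat) /\
 (forall j, (1 <= j <= m)%nat -> in_range n (a j) /\ x (a j) = e /\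
    Nat.even (a j) = Nat.even (j + nb neg)).
Proof.
  intros [[Ht _] [e [_ [b [Hb Hj]]]]]. split; auto. exists e.
  destruct (fin_choice (fun j k => (1 <= j <= m)%nat -> (b (j - 1) < k <= b j)%nat /\ x k = e) m)
    as [a Ha].
  { intros j Hj'. destruct (le_lt_dec 1 j) as [h|h].
    - destruct (Hj j ltac:(lia)) as [[k Hk] _]. exists k; auto.
    - exists 0%nat; intros; lia. }
  exists a. split.
  - intros j H1 H2. destruct (Ha j ltac:(lia) ltac:(lia)) as [A _].
    destruct (Ha (S j) ltac:(lia) ltac:(lia)) as [B _]. simpl in B. rewrite Nat.sub_0_r in B. lia.
  - intros j Hj'. destruct (Ha j ltac:(lia) Hj') as [A B].
    assert (b m = n) by apply Hb.
    assert (b j <= b m)%nat by (apply (bp_mono n m b Hb); lia).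
    split; [unfold in_range; lia|]. split; auto.
    apply psv. apply (proj2 (Hj j Hj')); auto.
Qed.

Lemma L_G n neg m x : L n neg m x -> t_ge0 n x /\ exists e, Aset n x e neg m.
Proof. intros H. destruct (L_pts n neg m x H) as [Ht [e He]]. split; auto. exists e; exact He. Qed.

Lemma Lbig_G n neg neg' m m' x : (m < m')%nat -> L n neg' m' x -> t_ge0 n x /\ exists e, Aset n x e neg m.
Proof.
  intros Hmm H. destruct (L_pts n neg' m' x H) as [Ht [e [a [Ha Hb]]]]. split; auto. exists e.
  destruct (Bool.bool_dec neg neg') as [->|Hn].
  - exists a. split; [intros; apply Ha; lia|]. intros j Hj; apply Hb; lia.
  - exists (fun j => a (S j)). split; [intros; apply Ha; lia|].
    intros j Hj. destruct (Hb (S j) ltac:(lia)) as [A [B C]]. repeat split; auto; try apply A.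
    rewrite C, even_Sj. destruct neg, neg'; try congruence; simpl;
    rewrite ?Nat.add_0_r, ?Nat.add_1_r, ?even_S, ?Bool.negb_involutive; reflexivity.
Qed.

Definition Qp (x : nat -> R) e p : Prop :=
  (forall k, (1 <= k <= p)%nat -> x k <> e) \/
  exists s r b, (1 <= r)%nat /\ b 0%nat = 0%nat /\ b r = p /\
    (forall j, (j < r)%nat -> (b j < b (S j))%nat) /\
    (forall j, (1 <= j <= r)%nat ->
      (exists k, (b (j - 1) < k <= b j)%nat /\ x k = e) /\
      (forall k, (b (j - 1) < k <= b j)%nat -> x k = e ->
         Nat.even k = Nat.even (j + nb s))).

Lemma Qp_all x e p : Qp x e p.
Proof.
  induction p as [|p IH].
  - left; intros; lia.
  - destruct IH as [H0 | [s [r [b [Hr [Hb0 [Hbr [Hinc Hj]]]]]]]].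
    + destruct (Req_EM_T (x (S p)) e) as [He|He].
      * right. exists (Nat.even (S p)), 1%nat, (fun j => if Nat.eqb j 0 then 0%nat else S p).
        refine (conj _ (conj _ (conj _ (conj _ _)))); [lia|reflexivity|reflexivity| |].
        { intros j Hj; assert (j = 0)%nat by lia; subst; simpl; lia. }
        { intros j Hj. assert (j = 1)%nat by lia; subst j. split.
          - exists (S p); simpl; split; auto; lia.
          - intros k Hk Hxk. simpl in Hk.
            destruct (Nat.eq_dec k (S p)) as [->|Hne].
            + destruct (Nat.even (S p)); reflexivity.
            + exfalso; apply (H0 k); auto; lia. }
      * left. intros k Hk. destruct (Nat.eq_dec k (S p)) as [->|Hne]; auto. apply H0; lia.
    + right.
      assert (ext : exists b', b' 0%nat = 0%nat /\ b' r = S p /\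
          (forall j, (j < r)%nat -> b' j = b j)) .
      { exists (fun j => if Nat.eqb j r then S p else b j). repeat split.
        - destruct (Nat.eqb_spec 0 r); [lia|auto].
        - rewrite Nat.eqb_refl; auto.
        - intros j Hjj. destruct (Nat.eqb_spec j r); [lia|auto]. }
      destruct (Req_EM_T (x (S p)) e) as [He|He];
      [destruct (Bool.bool_dec (Nat.even (S p)) (Nat.even (r + nb s))) as [Hp|Hp]|].
      1,3: destruct ext as [b' [B0 [Br Bj]]]; exists s, r, b'; refine (conj Hr (conj B0 (conj Br (conj _ _)))); [ | intros j Hjj; split; revert j Hjj ];
        [ intros j Hjj; destruct (Nat.eq_dec (S j) r) as [E|E];
          [ rewrite <- E in *; rewrite Br, Bj by lia; specialize (Hinc j Hjj); lia
          | rewrite !Bj by lia; apply Hinc; lia ]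
        | intros j Hjj; destruct (Nat.eq_dec j r) as [->|E];
          [ rewrite Br, Bj by lia; destruct (Hj r ltac:(lia)) as [[k [Hk1 Hk2]] _]; exists k; split; [lia|exact Hk2]
          | rewrite !Bj by lia; apply Hj; lia ]
        | intros j Hjj k; destruct (Nat.eq_dec j r) as [->|E];
          [ rewrite Br, Bj by lia; intros Hk Hxk;
            destruct (Nat.eq_dec k (S p)) as [->|E2];
            [ try assumption; exfalso; auto
            | apply (Hj r ltac:(lia)); auto; lia ]
          | rewrite !Bj by lia; apply Hj; lia ] ].
      * exists s, (S r), (fun j => if Nat.eqb j (S r) then S p else b j).
        refine (conj _ (conj _ (conj _ (conj _ _)))); [lia| | | |].
        { destruct (Nat.eqb_spec 0 (S r)); [lia|auto]. }
        { rewrite Nat.eqb_refl; auto. }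
        { intros j Hjj. rewrite (proj2 (Nat.eqb_neq j (S r))) by lia.
          destruct (Nat.eqb_spec (S j) (S r)).
          - assert (j = r) by lia; subst; lia.
          - apply Hinc; lia. }
        intros j Hjj. split; revert j Hjj.
        { intros j Hjj. destruct (Nat.eq_dec j (S r)) as [->|E].
          - rewrite Nat.eqb_refl. replace (S r - 1)%nat with r by lia.
            rewrite (proj2 (Nat.eqb_neq r (S r))) by lia. exists (S p); split; auto; lia.
          - rewrite (proj2 (Nat.eqb_neq j (S r))) by lia.
            rewrite (proj2 (Nat.eqb_neq (j-1) (S r))) by lia. apply Hj; lia. }
        { intros j Hjj k. destruct (Nat.eq_dec j (S r)) as [->|E].
          - rewrite Nat.eqb_refl. replace (S r - 1)%nat with r by lia.
            rewrite (proj2 (Nat.eqb_neq r (S r))) by lia. intros Hk _.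
            assert (k = S p) by lia; subst k. rewrite even_Sj.
            destruct (Nat.even (S p)), (Nat.even (r + nb s)); simpl in *; congruence.
          - rewrite (proj2 (Nat.eqb_neq j (S r))) by lia.
            rewrite (proj2 (Nat.eqb_neq (j-1) (S r))) by lia. apply Hj; lia. }
Qed.

Lemma exist_type n x e : t_ge0 n x -> is_level_value n x e -> exists s r, L n s r x.
Proof.
  intros Ht Hl. destruct (Qp_all x e n) as [H0 | [s [r [b [Hr [Hb0 [Hbr [Hinc Hj]]]]]]]].
  - exfalso. destruct Hl as [k [k' [A [_ [_ [_ [E _]]]]]]]. apply (H0 k A E).
  - exists s, r. split; [apply (lv_level n x e Ht Hl)|]. exists e; split; auto.
    exists b; split; [repeat split; auto|].
    intros j Hjr. destruct (Hj j Hjr) as [A B]. split; auto.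
    intros k Hk Hxk. apply psv. apply B; auto.
Qed.

Lemma key n x s r neg m e : (2 <= m)%nat -> t_ge0 n x -> L n s r x -> Aset n x e neg m ->
  (m <= r)%nat /\ (m = r -> neg = s).
Proof.
  intros Hm Ht [_ [e0 [Hl0 [b [Hb Hj]]]]] HA.
  pose proof (Aset_lv n x e neg m Hm HA) as Hl.
  assert (e0 = e) by (apply (lv_unique n x); auto). subst e0.
  destruct HA as [a [Ha Hb']].
  assert (Hc : forall i, (1 <= i <= m)%nat -> exists j, (1 <= j <= r)%nat /\ (b (j-1) < a i <= b j)%nat).
  { intros i Hi. apply (bp_cover n r b); auto. apply Hb'; auto. }
  assert (Hpar : forall i j, (1 <= i <= m)%nat -> (1 <= j <= r)%nat -> (b (j-1) < a i <= b j)%nat ->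
     Nat.even (i + nb neg) = Nat.even (j + nb s)).
  { intros i j Hi Hjj Hk. destruct (Hb' i Hi) as [_ [X P]]. rewrite <- P.
    apply psv. apply (proj2 (Hj j Hjj)); auto. }
  destruct (Hc 1%nat ltac:(lia)) as [j1 [Hj1 Hk1]].
  assert (Hind : forall i, (1 <= i <= m)%nat -> forall j, (1 <= j <= r)%nat ->
     (b (j-1) < a i <= b j)%nat -> (i - 1 + j1 <= j)%nat).
  { induction i as [|i IH]; intros Hi j Hjj Hk; [lia|].
    destruct (Nat.eq_dec i 0) as [->|Hi0].
    - simpl. apply (bp_order n r b (a 1%nat) (a 1%nat) j1 j Hb); auto.
    - destruct (Hc i ltac:(lia)) as [j0 [Hj0 Hk0]].
      specialize (IH ltac:(lia) j0 Hj0 Hk0).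
      assert (a i < a (S i))%nat by (apply Ha; lia).
      assert (j0 <= j)%nat by (apply (bp_order n r b (a i) (a (S i)) j0 j Hb); auto; lia).
      assert (j0 <> j).
      { intros ->. pose proof (Hpar i j ltac:(lia) Hjj Hk0).
        pose proof (Hpar (S i) j Hi Hjj Hk). rewrite even_Sj in *.
        destruct (Nat.even (i + nb neg)); simpl in *; congruence. }
      lia. }
  destruct (Hc m ltac:(lia)) as [jm [Hjm Hkm]].
  pose proof (Hind m ltac:(lia) jm Hjm Hkm). split; [lia|].
  intros ->. assert (j1 = 1)%nat by lia. subst j1.
  pose proof (Hpar 1%nat 1%nat ltac:(lia) Hj1 Hk1).
  destruct neg, s; simpl in *; congruence.
Qed.

Lemma sep1 (x : nat -> R) a N : exists d, d > 0 /\ forall k, (k <= N)%nat -> a <> x k -> d <= Rabs (a - x k).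
Proof.
  induction N as [|N [d [Hd H]]].
  - destruct (Req_EM_T a (x 0%nat)) as [E|E].
    + exists 1; split; [lra|]. intros k Hk Hne. assert (k = 0)%nat by lia. subst; congruence.
    + exists (Rabs (a - x 0%nat)); split.
      * apply Rabs_pos_lt. lra.
      * intros k Hk _. assert (k = 0)%nat by lia. subst; lra.
  - destruct (Req_EM_T a (x (S N))) as [E|E].
    + exists d; split; auto. intros k Hk Hne. destruct (Nat.eq_dec k (S N)) as [->|]; [congruence|].
      apply H; auto; lia.
    + exists (Rmin d (Rabs (a - x (S N)))); split.
      * apply Rmin_glb_lt; auto. apply Rabs_pos_lt. lra.
      * intros k Hk Hne. destruct (Nat.eq_dec k (S N)) as [->|].
        -- apply Rmin_r.
        -- eapply Rle_trans; [apply Rmin_l|]. apply H; auto; lia.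
Qed.

Lemma sep2 (x : nat -> R) N : exists d, d > 0 /\ forall k k', (k <= N)%nat -> (k' <= N)%nat ->
  x k <> x k' -> d <= Rabs (x k - x k').
Proof.
  induction N as [|N [d [Hd H]]].
  - exists 1; split; [lra|]. intros k k' Hk Hk' Hne. assert (k = 0)%nat by lia. assert (k' = 0)%nat by lia.
    subst; congruence.
  - destruct (sep1 x (x (S N)) (S N)) as [d' [Hd' H']].
    exists (Rmin d d'); split; [apply Rmin_glb_lt; auto|].
    intros k k' Hk Hk' Hne.
    destruct (Nat.eq_dec k (S N)) as [->|E1].
    + eapply Rle_trans; [apply Rmin_r|]. apply H'; auto.
    + destruct (Nat.eq_dec k' (S N)) as [->|E2].
      * eapply Rle_trans; [apply Rmin_r|]. rewrite Rabs_minus_sym. apply H'; auto.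
      * eapply Rle_trans; [apply Rmin_l|]. apply H; auto; lia.
Qed.

Lemma closure_G n neg m x : (2 <= m)%nat -> closure n (L n neg m) x ->
  t_ge0 n x /\ exists e, Aset n x e neg m.
Proof.
  intros Hm Hc. destruct (sep2 x n) as [d [Hd Hs]].
  destruct (Hc (d/2) ltac:(lra)) as [y [Hy Hxy]].
  destruct (L_G n neg m y Hy) as [Ht [ey [a [Ha Hb]]]].
  assert (Hx : forall k, in_range n k -> Rabs (x k - y k) < d/2) by exact Hxy.
  assert (Heq : forall k k', in_range n k -> in_range n k' -> y k = y k' -> x k = x k').
  { intros k k' Hk Hk' E. destruct (Req_EM_T (x k) (x k')) as [|N]; auto. exfalso.
    pose proof (Hs k k' ltac:(unfold in_range in Hk; lia) ltac:(unfold in_range in Hk'; lia) N).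
    pose proof (Hx k Hk). pose proof (Hx k' Hk').
    assert (Rabs (x k - x k') <= Rabs (x k - y k) + Rabs (y k' - x k')).
    { replace (x k - x k') with ((x k - y k) + (y k' - x k')) by lra. apply Rabs_triang. }
    rewrite (Rabs_minus_sym (y k')) in H2. lra. }
  split.
  - intros k k' Hk Hk' Ho He. pose proof (Ht k k' Hk Hk' Ho He).
    destruct (Rle_lt_dec (x k') (x k)) as [|L']; [lra|]. exfalso.
    assert (x k <> x k') by lra.
    pose proof (Hs k k' ltac:(unfold in_range in Hk; lia) ltac:(unfold in_range in Hk'; lia) H0).
    pose proof (Hx k Hk). pose proof (Hx k' Hk').
    rewrite Rabs_left in H1 by lra.
    apply Rabs_def2 in H2. apply Rabs_def2 in H3. lra.
  - exists (x (a 1%nat)). exists a. split; auto. intros j Hj.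
    destruct (Hb j Hj) as [A [B C]]. destruct (Hb 1%nat ltac:(lia)) as [A1 [B1 C1]].
    repeat split; auto; try apply A. apply Heq; auto. congruence.
Qed.

Lemma G_closure n neg m x : (2 <= m)%nat -> t_ge0 n x -> (exists e, Aset n x e neg m) ->
  closure n (L n neg m) x.
Proof.
  intros Hm Ht [e HA] eps Heps.
  pose proof (Aset_lv n x e neg m Hm HA) as Hl.
  destruct HA as [a [Ha Hb]].
  pose proof (Aset_mono m a Ha) as Hmono.
  set (sel := fun k => existsb (fun j => Nat.eqb (a j) k) (seq 1 m)).
  assert (Hsel : forall k, sel k = true <-> exists j, (1 <= j <= m)%nat /\ a j = k).
  { intros k. unfold sel. rewrite existsb_exists. split.
    - intros [j [Hj E]]. apply in_seq in Hj. apply Nat.eqb_eq in E. exists j; split; [lia|auto].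
    - intros [j [Hj E]]. exists j; split; [apply in_seq; lia|apply Nat.eqb_eq; auto]. }
  set (y := fun k => if sel k then x k else
              if Req_EM_T (x k) e then (if Nat.odd k then e + eps/2 else e - eps/2) else x k).
  destruct Hl as [ko [ke [Rko [Rke [Oko [Eke [Xko Xke]]]]]]].
  assert (Hodd : forall k, in_range n k -> Nat.odd k = true -> e <= x k).
  { intros k Hk Hok. pose proof (Ht k ke Hk Rke Hok Eke). lra. }
  assert (Hev : forall k, in_range n k -> Nat.even k = true -> x k <= e).
  { intros k Hk Hek. pose proof (Ht ko k Rko Hk Oko Hek). lra. }
  assert (Hya : forall j, (1 <= j <= m)%nat -> y (a j) = e).
  { intros j Hj. unfold y. replace (sel (a j)) with true by (symmetry; apply Hsel; eauto).
    apply Hb; auto. }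
  assert (Hye : forall k, y k = e -> sel k = true).
  { intros k. unfold y. destruct (sel k); auto.
    destruct (Req_EM_T (x k) e); [destruct (Nat.odd k)|]; intros; lra. }
  assert (Hyge : forall k, in_range n k -> Nat.odd k = true -> e <= y k).
  { intros k Hk Hok. unfold y. destruct (sel k); [apply Hodd; auto|].
    destruct (Req_EM_T (x k) e); [rewrite Hok; lra|apply Hodd; auto]. }
  assert (Hyle : forall k, in_range n k -> Nat.even k = true -> y k <= e).
  { intros k Hk Hek. unfold y. destruct (sel k); [apply Hev; auto|].
    assert (Nat.odd k = false) by (unfold Nat.odd; rewrite Hek; reflexivity).
    destruct (Req_EM_T (x k) e); [rewrite H; lra|apply Hev; auto]. }
  assert (Hyt : t_ge0 n y).
  { intros k k' Hk Hk' Ho He. pose proof (Hyge k Hk Ho). pose proof (Hyle k' Hk' He). lra. }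
  assert (Hlv : is_level_value n y e).
  { destruct (Hb 1%nat ltac:(lia)) as [R1 [_ P1]]. destruct (Hb 2%nat ltac:(lia)) as [R2 [_ P2]].
    rewrite nb_even12 in P1.
    destruct (Nat.even (a 1%nat)) eqn:E1; [exists (a 2%nat), (a 1%nat)|exists (a 1%nat), (a 2%nat)];
    repeat split; try apply R1; try apply R2; auto; unfold Nat.odd;
    try (rewrite P2; destruct (Nat.even (2 + nb neg)); simpl in *; congruence);
    try (rewrite E1; reflexivity); apply Hya; lia. }
  exists y. split.
  - split; [apply (lv_level n y e Hyt Hlv)|]. exists e. split; auto.
    set (b := fun j => if Nat.eqb j 0 then 0%nat else if Nat.ltb j m then a j else n).
    assert (Bj : forall j, (1 <= j < m)%nat -> b j = a j).
    { intros j Hj. unfold b. rewrite (proj2 (Nat.eqb_neq j 0)) by lia.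
      rewrite (proj2 (Nat.ltb_lt j m)) by lia. reflexivity. }
    assert (Bm : b m = n).
    { unfold b. rewrite (proj2 (Nat.eqb_neq m 0)) by lia. rewrite Nat.ltb_irrefl. reflexivity. }
    assert (B0 : b 0%nat = 0%nat) by reflexivity.
    assert (Hrange : forall j, (1 <= j <= m)%nat -> (1 <= a j <= n)%nat) by (intros j Hj; apply Hb; auto).
    exists b. split; [split; [auto|split; [auto|]]|].
    + intros j Hj. destruct (Nat.eq_dec j 0) as [->|E].
      * rewrite B0, Bj by lia. pose proof (Hrange 1%nat ltac:(lia)). lia.
      * destruct (Nat.eq_dec (S j) m) as [<-|E2].
        -- rewrite Bm, Bj by lia. pose proof (Hrange (S j) ltac:(lia)).
           pose proof (Ha j ltac:(lia) ltac:(lia)). lia.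
        -- rewrite !Bj by lia. apply Ha; lia.
    + assert (Hlow : forall j, (1 <= j <= m)%nat -> (b (j-1) < a j)%nat).
      { intros j Hj. destruct (Nat.eq_dec j 1) as [->|E].
        - simpl. rewrite B0. pose proof (Hrange 1%nat ltac:(lia)). lia.
        - rewrite Bj by lia. replace j with (S (j-1)) at 2 by lia. apply Ha; lia. }
      assert (Hup : forall j, (1 <= j <= m)%nat -> (a j <= b j)%nat).
      { intros j Hj. destruct (Nat.eq_dec j m) as [->|E].
        - rewrite Bm. pose proof (Hrange m ltac:(lia)). lia.
        - rewrite Bj by lia. lia. }
      intros j Hj. split.
      * exists (a j). split; [split; [apply Hlow|apply Hup]; auto|apply Hya; auto].
      * intros k Hk Hyk. apply Hye in Hyk. apply Hsel in Hyk. destruct Hyk as [i [Hi <-]].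
        assert (i = j).
        { destruct (lt_eq_lt_dec i j) as [[Hlt|]|Hgt]; auto; exfalso.
          - assert (a i <= b (j-1))%nat.
            { rewrite Bj by lia. destruct (Nat.eq_dec i (j-1)) as [<-|]; [lia|].
              pose proof (Hmono i (j-1)%nat ltac:(lia) ltac:(lia) ltac:(lia)). lia. }
            lia.
          - assert (b j < a i)%nat.
            { rewrite Bj by lia. apply Hmono; lia. }
            lia. }
        subst i. apply psv. apply Hb; auto.
  - intros k Hk. unfold y. destruct (sel k).
    + rewrite Rminus_diag_eq by reflexivity. rewrite Rabs_R0. lra.
    + destruct (Req_EM_T (x k) e) as [E|E]; [destruct (Nat.odd k)|].
      * rewrite E. replace (e - (e + eps/2)) with (-(eps/2)) by lra. rewrite Rabs_Ropp, Rabs_pos_eq; lra.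
      * rewrite E. replace (e - (e - eps/2)) with (eps/2) by lra. rewrite Rabs_pos_eq; lra.
      * rewrite Rminus_diag_eq by reflexivity. rewrite Rabs_R0. lra.
Qed.

Lemma G_type n neg m x : (2 <= m)%nat -> t_ge0 n x -> (exists e, Aset n x e neg m) ->
  exists s r, L n s r x /\ (m <= r)%nat /\ (m = r -> neg = s).
Proof.
  intros Hm Ht [e HA]. destruct (exist_type n x e Ht (Aset_lv n x e neg m Hm HA)) as [s [r HL]].
  exists s, r. split; auto. apply (key n x s r neg m e); auto.
Qed.

Theorem lemma1p10 (n : nat) (hn : (2 <= n)%nat) :
  (forall (neg : bool) (m : nat), (2 <= m)%nat ->
     forall x : nat -> R,
       closure n (L n neg m) x <->
       (L n neg m x \/ exists (neg' : bool) (m' : nat), (m < m')%nat /\ L n neg' m' x)) /\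
  (forall m : nat, (2 <= m)%nat ->
     forall x : nat -> R,
       (closure n (L n false m) x /\ closure n (L n true m) x) <->
       exists (neg' : bool) (m' : nat), (m < m')%nat /\ L n neg' m' x).
Proof.
  split.
  - intros neg m Hm x. split.
    + intros Hc. destruct (closure_G n neg m x Hm Hc) as [Ht HG].
      destruct (G_type n neg m x Hm Ht HG) as [s [r [HL [H1 H2]]]].
      destruct (Nat.eq_dec m r) as [<-|E].
      * left. rewrite (H2 eq_refl). exact HL.
      * right. exists s, r. split; [lia|exact HL].
    + intros [HL | [neg' [m' [Hlt HL]]]].
      * destruct (L_G n neg m x HL) as [Ht HG]. apply G_closure; auto.
      * destruct (Lbig_G n neg neg' m m' x Hlt HL) as [Ht HG]. apply G_closure; auto.
  - intros m Hm x. split.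
    + intros [Hc1 Hc2]. destruct (closure_G n false m x Hm Hc1) as [Ht HG1].
      destruct (closure_G n true m x Hm Hc2) as [_ [e2 HA2]].
      destruct (G_type n false m x Hm Ht HG1) as [s [r [HL [H1 H2]]]].
      destruct (key n x s r true m e2 Hm Ht HL HA2) as [_ H3].
      exists s, r. split; auto.
      destruct (Nat.eq_dec m r) as [E|E]; [|lia].
      pose proof (H2 E); pose proof (H3 E); congruence.
    + intros [neg' [m' [Hlt HL]]].
      destruct (Lbig_G n false neg' m m' x Hlt HL) as [Ht HG1].
      destruct (Lbig_G n true neg' m m' x Hlt HL) as [_ HG2].
      split; apply G_closure; auto.
Qed.
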